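(* Let $(\mathfrak J,B)$ be a $B$-irreducible pseudo-euclidean Jordan algebra. Then its operator of Casimir type $R_c$ is either nilpotent or invertible.
   Context: All algebras are finite-dimensional over a field of characteristic zero. A Jordan algebra is a commutative algebra with $x(yx^2)=(xy)x^2$; $(\mathfrak J,B)$ is pseudo-euclidean if $B$ is nondegenerate symmetric with $B(xy,z)=B(x,yz)$. $(\mathfrak J,B)$ is $B$-irreducible if it has no nontrivial ideal $\mathcal I$ with $B|_{\mathcal I\times\mathcal I}$ nondegenerate. With bases $\{e_i\},\{e'_i\}$ of $\mathfrak J$ satisfying $B(e_i,e'_j)=\delta_{ij}$ and $c=\sum_ie_ie'_i$, the operator of Casimir type is $R_c(x)=xc$ (independent of the choice of such bases). *)

(* Defs.v *)
From HB Require Import structures.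
From mathcomp Require Import all_boot all_order all_algebra.
Set Implicit Arguments. Unset Strict Implicit. Unset Printing Implicit Defensive.
Import GRing.Theory.
Local Open Scope ring_scope.

Section Defs.
Variables (F : fieldType) (V : vectType F).

Definition bilinear_mul (mul : V -> V -> V) : Prop :=
  (forall x a y z, mul x (a *: y + z) = a *: mul x y + mul x z) /\
  (forall x a y z, mul (a *: y + z) x = a *: mul y x + mul z x).

Definition jordan_mul (mul : V -> V -> V) : Prop :=
  bilinear_mul mul /\
  (forall x y, mul x y = mul y x) /\
  (forall x y, mul x (mul y (mul x x)) = mul (mul x y) (mul x x)).

Definition pseudo_euclidean (mul : V -> V -> V) (B : V -> V -> F) : Prop :=
  (forall x a y z, B x (a *: y + z) = a * B x y + B x z) /\
  (forall x y, B x y = B y x) /\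
  (forall x, (forall y, B x y = 0) -> x = 0) /\
  (forall x y z, B (mul x y) z = B x (mul y z)).

Definition is_ideal (mul : V -> V -> V) (I : {vspace V}) : Prop :=
  forall x y, y \in I -> (mul x y \in I) && (mul y x \in I).

Definition B_nondeg_on (B : V -> V -> F) (I : {vspace V}) : Prop :=
  forall x, x \in I -> (forall y, y \in I -> B x y = 0) -> x = 0.

Definition B_irreducible (mul : V -> V -> V) (B : V -> V -> F) : Prop :=
  forall I : {vspace V}, is_ideal mul I -> B_nondeg_on B I ->
    I = 0%VS \/ I = fullv.

Definition dual_bases (B : V -> V -> F) (e e' : (\dim {:V}).-tuple V) : Prop :=
  basis_of fullv e /\ basis_of fullv e' /\
  (forall i j : 'I_(\dim {:V}), B (tnth e i) (tnth e' j) = (i == j)%:R).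

Definition casimir_elt (mul : V -> V -> V) (e e' : (\dim {:V}).-tuple V) : V :=
  \sum_(i < \dim {:V}) mul (tnth e i) (tnth e' i).

Definition R_casimir (mul : V -> V -> V) (e e' : (\dim {:V}).-tuple V) : V -> V :=
  fun x => mul x (casimir_elt mul e e').

Definition nilpotent_op (f : V -> V) : Prop :=
  exists k : nat, forall x, iter k f x = 0.

End Defs.

(* Main.v *)
Require Import Defs.
From HB Require Import structures.
From mathcomp Require Import all_boot all_order all_algebra.
Import GRing.Theory.
Local Open Scope ring_scope.

Section Jordan.
Variables (F : fieldType) (V : vectType F) (mul : V -> V -> V).
Hypothesis charF0 : [pchar F] =i pred0.
Hypothesis HJ : jordan_mul mul.

Let HBl : bilinear_mul mul := HJ.1.
Let HC : forall x y, mul x y = mul y x := HJ.2.1.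
Let HJid : forall x y, mul x (mul y (mul x x)) = mul (mul x y) (mul x x) := HJ.2.2.

Lemma mulDr x y z : mul x (y + z) = mul x y + mul x z.
Proof. by have := HBl.1 x 1 y z; rewrite !scale1r. Qed.
Lemma mulx0 x : mul x 0 = 0.
Proof.
have := mulDr x 0 0; rewrite addr0 => /(congr1 (fun v => v - mul x 0)).
by rewrite subrr addrK.
Qed.
Lemma mulZr x a y : mul x (a *: y) = a *: mul x y.
Proof. by have := HBl.1 x a y 0; rewrite !addr0 mulx0 addr0. Qed.
Lemma mulNr x y : mul x (- y) = - mul x y.
Proof. by rewrite -scaleN1r mulZr scaleN1r. Qed.
Lemma mulDl x y z : mul (y + z) x = mul y x + mul z x.
Proof. by rewrite !(HC _ x) mulDr. Qed.
Lemma mul0x x : mul 0 x = 0.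
Proof. by rewrite HC mulx0. Qed.
Lemma mulZl x a y : mul (a *: y) x = a *: mul y x.
Proof. by rewrite !(HC _ x) mulZr. Qed.
Lemma mulNl x y : mul (- y) x = - mul y x.
Proof. by rewrite !(HC _ x) mulNr. Qed.

Lemma rearr6 (p1 p2 p3 p4 p5 p6 q1 q2 q3 q4 q5 q6 : V) :
  (p1+q1 + (p2+q2) + (p3+q3)) - ((p4+q4) + (p5+q5) + (p6+q6)) =
  (p1+p2+p3 - (p4+p5+p6)) + (q1+q2+q3 - (q4+q5+q6)).
Proof.
rewrite [in LHS](addrACA p1) [in LHS](addrACA (p1 + p2)).
rewrite [in LHS](addrACA p4) [in LHS](addrACA (p4 + p5)).
by rewrite opprD (addrACA (p1 + p2 + p3)).
Qed.

Section G.
Variable y : V.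
Definition G a b c :=
  mul a (mul y (mul b c)) + mul b (mul y (mul c a)) + mul c (mul y (mul a b)) -
  (mul (mul a y) (mul b c) + mul (mul b y) (mul c a) + mul (mul c y) (mul a b)).

Lemma G12 a b c : G a b c = G b a c.
Proof.
rewrite /G [mul a c]HC [mul c b]HC [mul b a]HC.
by congr (_ + _ - (_ + _)); rewrite addrC.
Qed.
Lemma G23 a b c : G a b c = G a c b.
Proof.
rewrite /G [mul a c]HC [mul c b]HC [mul b a]HC.
congr (_ - _); first by rewrite addrAC addrC.
by rewrite addrAC addrC.
Qed.

Lemma GD1 a a' b c : G (a + a') b c = G a b c + G a' b c.
Proof. rewrite /G !(mulDr, mulDl); exact: rearr6. Qed.
Lemma GD2 a b b' c : G a (b + b') c = G a b c + G a b' c.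
Proof. by rewrite G12 GD1 (G12 b) (G12 b'). Qed.
Lemma GD3 a b c c' : G a b (c + c') = G a b c + G a b c'.
Proof. by rewrite G23 GD2 (G23 a c) (G23 a c'). Qed.
Lemma G01 b c : G 0 b c = 0.
Proof.
have := GD1 0 0 b c; rewrite addr0 => /(congr1 (fun v => v - G 0 b c)).
by rewrite subrr addrK.
Qed.
Lemma GN1 a b c : G (- a) b c = - G a b c.
Proof. by apply/eqP; rewrite -subr_eq0 opprK -GD1 addNr G01. Qed.
Lemma GN2 a b c : G a (- b) c = - G a b c.
Proof. by rewrite G12 GN1 G12. Qed.
Lemma GN3 a b c : G a b (- c) = - G a b c.
Proof. by rewrite G23 GN2 G23. Qed.
Lemma Gxxx x : G x x x = 0.
Proof. by rewrite /G !HJid subrr. Qed.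

Lemma G3exp x b : G (x+b) (x+b) (x+b) = (G x x b + G x b b) *+ 3.
Proof.
rewrite !GD1 !GD2 !GD3 (G12 b x x) (G23 x b x) (G23 b b x) (G12 b x b) !Gxxx.
rewrite add0r addr0 !mulrS mulr0n addr0.
move: (G x x b) (G x b b) => u v.
by rewrite [u + (u+v)]addrC (addrACA (u+v) u) addrC.
Qed.

Lemma natK n (w : V) : w *+ n.+1 = 0 -> w = 0.
Proof.
rewrite -scaler_nat => /eqP; rewrite scaler_eq0 => /orP [|/eqP //].
by move: charF0 => /pcharf0P ->.
Qed.

Lemma Gxxb x b : G x x b = 0.
Proof.
have h1 := G3exp x b; rewrite Gxxx in h1; move/esym/natK/eqP: h1.
have h2 := G3exp x (- b); rewrite Gxxx GN3 GN2 GN3 opprK in h2; move/esym/natK: h2.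
rewrite addr_eq0 => h2 /eqP h1.
have : G x b b *+ 2 = 0 by rewrite mulr2n; rewrite h1 opprK in h2.
by move/natK => h3; rewrite h1 h3 oppr0.
Qed.

Lemma G0 a c b : G a c b = 0.
Proof.
have := Gxxb (a + c) b; rewrite !GD1 !GD2 !Gxxb (G12 c a b) add0r addr0 -mulr2n.
exact: natK.
Qed.

End G.

Definition lin (P : V -> V) := forall a x y, P (a *: x + y) = a *: P x + P y.

Lemma lin0 P : lin P -> P 0 = 0.
Proof.
move=> hP; have := hP 1 0 0; rewrite !scale1r addr0 => /(congr1 (fun v => v - P 0)).
by rewrite subrr addrK.
Qed.
Lemma linD P : lin P -> forall x y, P (x + y) = P x + P y.
Proof. by move=> hP x y; have := hP 1 x y; rewrite !scale1r. Qed.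
Lemma linZ P : lin P -> forall a x, P (a *: x) = a *: P x.
Proof. by move=> hP a x; rewrite -[a *: x]addr0 hP lin0 // addr0. Qed.
Lemma lin_sum P n (a : 'I_n -> F) (v : 'I_n -> V) : lin P ->
  P (\sum_i a i *: v i) = \sum_i a i *: P (v i).
Proof.
move=> hP; rewrite (big_morph P (linD _ hP) (lin0 _ hP)).
by apply: eq_bigr => i _; rewrite linZ.
Qed.
Lemma lin_mul a : lin (mul a).
Proof. by move=> k x y; rewrite mulDr mulZr. Qed.
Lemma lin_comp P Q : lin P -> lin Q -> lin (fun w => P (Q w)).
Proof. by move=> hP hQ k x y; rewrite hQ hP. Qed.

Variable B : V -> V -> F.
Hypothesis HB : pseudo_euclidean mul B.
Variables (e e' : (\dim {:V}).-tuple V).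
Hypothesis Hdual : dual_bases B e e'.

Let Blin : forall x a y z, B x (a *: y + z) = a * B x y + B x z := HB.1.
Let Bsym : forall x y, B x y = B y x := HB.2.1.
Let Bnd : forall x, (forall y, B x y = 0) -> x = 0 := HB.2.2.1.
Let Bass : forall x y z, B (mul x y) z = B x (mul y z) := HB.2.2.2.

Lemma BDr x y z : B x (y + z) = B x y + B x z.
Proof. by have := Blin x 1 y z; rewrite scale1r mul1r. Qed.
Lemma B0r x : B x 0 = 0.
Proof.
have := BDr x 0 0; rewrite addr0 => /(congr1 (fun v => v - B x 0)).
by rewrite subrr addrK.
Qed.
Lemma BZr x a y : B x (a *: y) = a * B x y.
Proof. by rewrite -[a *: y]addr0 Blin B0r addr0. Qed.
Lemma BNr x y : B x (- y) = - B x y.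
Proof. by rewrite -scaleN1r BZr mulN1r. Qed.
Lemma Bsumr x n (v : 'I_n -> V) : B x (\sum_i v i) = \sum_i B x (v i).
Proof. exact: (big_morph (B x) (BDr x) (B0r x)). Qed.
Lemma Bsuml x n (v : 'I_n -> V) : B (\sum_i v i) x = \sum_i B (v i) x.
Proof. by rewrite Bsym Bsumr; apply: eq_bigr => i _; rewrite Bsym. Qed.

Local Notation n := (\dim {:V}).
Local Notation ee i := (tnth e i).
Local Notation ee' i := (tnth e' i).

Lemma expand v : v = \sum_(j < n) B (ee j) v *: ee' j.
Proof.
apply/eqP; rewrite -subr_eq0; apply/eqP; apply: Bnd => w.
have hk k : B (ee k) (v - \sum_(j < n) B (ee j) v *: ee' j) = 0.
  rewrite BDr BNr Bsumr (bigD1 k) //= big1 ?addr0.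
    by rewrite BZr Hdual.2.2 eqxx mulr1 subrr.
  by move=> j /negbTE hj; rewrite BZr Hdual.2.2 eq_sym hj mulr0.
rewrite Bsym (coord_basis Hdual.1 (memvf w)) Bsuml big1 // => i _.
by rewrite Bsym BZr -tnth_nth Bsym hk mulr0.
Qed.

Definition tau (P : V -> V) := \sum_(i < n) B (ee i) (P (ee' i)).

Lemma tau_ext P Q : (forall w, P w = Q w) -> tau P = tau Q.
Proof. by move=> h; apply: eq_bigr => i _; rewrite h. Qed.

Lemma tau_comm P Q : lin P -> lin Q -> tau (fun w => P (Q w)) = tau (fun w => Q (P w)).
Proof.
move=> hP hQ; rewrite /tau.
have E R S : lin R -> \sum_(i < n) B (ee i) (R (S (ee' i))) =
    \sum_(i < n) \sum_(j < n) B (ee j) (S (ee' i)) * B (ee i) (R (ee' j)).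
  move=> hR; apply: eq_bigr => i _.
  by rewrite {1}[S _]expand lin_sum // Bsumr; apply: eq_bigr => j _; rewrite BZr.
rewrite (E P Q hP) (E Q P hQ) exchange_big /=.
by apply: eq_bigr => i _; apply: eq_bigr => j _; rewrite mulrC.
Qed.

Definition cas := casimir_elt mul e e'.

Lemma Bcas w : B cas w = tau (mul w).
Proof.
rewrite /cas /casimir_elt Bsuml; apply: eq_bigr => i _.
by rewrite Bass (HC _ w).
Qed.

Lemma tauG y a b :
  tau (fun w => mul a (mul y (mul b w))) + tau (fun w => mul b (mul y (mul w a)))
  + tau (fun w => mul w (mul y (mul a b))) =
  tau (fun w => mul (mul a y) (mul b w)) + tau (fun w => mul (mul b y) (mul w a))
  + tau (fun w => mul (mul w y) (mul a b)).
Proof.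
apply/eqP; rewrite -subr_eq0; apply/eqP.
have : tau (G y a b) = 0 by rewrite /tau big1 // => i _; rewrite G0 B0r.
move=> h; transitivity (tau (G y a b)); last exact: h.
rewrite /tau /G /=.
under [RHS]eq_bigr => i _ do rewrite BDr BNr !BDr.
by rewrite sumrB !big_split.
Qed.

Lemma tassoc0 x z q : tau (mul (mul x (mul z q))) = tau (mul (mul z (mul x q))).
Proof.
have hA := tauG x z q; have hB := tauG z x q.
have e1 : tau (fun w => mul (mul x z) (mul q w)) = tau (fun w => mul (mul z x) (mul q w)).
  by apply: tau_ext => w; rewrite (HC x z).
have e2 : tau (fun w => mul (mul q z) (mul w x)) = tau (fun w => mul (mul w x) (mul z q)).
  by apply: tau_ext => w; rewrite (HC q z) HC.
have e3 : tau (fun w => mul (mul w z) (mul x q)) = tau (fun w => mul (mul q x) (mul w z)).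
  by apply: tau_ext => w; rewrite (HC x q) HC.
have e4 : tau (fun w => mul q (mul z (mul w x))) = tau (fun w => mul z (mul x (mul q w))).
  transitivity (tau (fun w => mul q ((fun u => mul z (mul x u)) w))).
    by apply: tau_ext => w; rewrite (HC w x).
  exact: (tau_comm _ _ (lin_mul q) (lin_comp _ _ (lin_mul z) (lin_mul x))).
have e5 : tau (fun w => mul x (mul z (mul q w))) = tau (fun w => mul q (mul x (mul w z))).
  transitivity (tau (fun w => mul q ((fun u => mul x (mul z u)) w))).
    exact: (tau_comm _ _ (lin_comp _ _ (lin_mul x) (lin_mul z)) (lin_mul q)).
  by apply: tau_ext => w /=; rewrite (HC w z).
have e6 u : tau (fun w => mul w u) = tau (mul u) by apply: tau_ext => w; rewrite HC.
rewrite e1 e2 e3 e4 e5 !e6 in hB; rewrite !e6 in hA.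
apply: (@addrI _ (tau (fun w => mul z (mul x (mul q w))) + tau (fun w => mul q (mul x (mul w z))))).
rewrite hA.
move: hB; set d := tau (fun w => mul z (mul x (mul q w))).
set f := tau (fun w => mul q (mul x (mul w z))) => hB.
by rewrite (addrC d) hB addrAC.
Qed.

Lemma tassoc a b c : tau (mul (mul (mul a b) c)) = tau (mul (mul a (mul b c))).
Proof.
by rewrite (HC (mul a b) c) tassoc0 (HC c b).
Qed.

Lemma BDl x y z : B (y + z) x = B y x + B z x.
Proof. by rewrite Bsym BDr !(Bsym x). Qed.
Lemma BNl x y : B (- y) x = - B y x.
Proof. by rewrite Bsym BNr Bsym. Qed.

Lemma Rc_mul x q : mul (mul x q) cas = mul x (mul q cas).
Proof.
apply/eqP; rewrite -subr_eq0; apply/eqP; apply: Bnd => w.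
have h1 : B (mul (mul x q) cas) w = tau (mul (mul (mul x q) w)).
  by rewrite (HC _ cas) Bass Bcas.
have h2 : B (mul x (mul q cas)) w = tau (mul (mul q (mul x w))).
  by rewrite (HC x) Bass (HC q cas) Bass Bcas.
by rewrite BDl BNl h1 h2 -tassoc (HC q x) tassoc subrr.
Qed.

Lemma Rc_sym u v : B (mul u cas) v = B u (mul v cas).
Proof. by rewrite (HC u) Bass [RHS]Bsym (HC v) Bass (HC v u). Qed.

Lemma lin_Rc : lin (fun u => mul u cas).
Proof. by move=> k x y; rewrite mulDl mulZl. Qed.

Hypothesis Hirr : B_irreducible mul B.

Local Notation f := (fun u => mul u cas).

Lemma iter_mul k x q : iter k f (mul x q) = mul x (iter k f q).
Proof. by elim: k => //= k ->; rewrite Rc_mul. Qed.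
Lemma iter_sym k u v : B (iter k f u) v = B u (iter k f v).
Proof. by elim: k u v => //= k IH u v; rewrite Rc_sym IH -iterSr. Qed.
Lemma iter0 k : iter k f 0 = 0.
Proof. by elim: k => //= k ->; rewrite mul0x. Qed.

Lemma casimir_dichotomy : nilpotent_op f \/ bijective f.
Proof.
have hf : linear_for *:%R f by move=> a u v; exact: lin_Rc.
pose fL : {linear V -> V} := HB.pack f (GRing.isLinear.Build F V V *:%R f hf).
pose g : 'End(V) := linfun fL.
have hg x : g x = f x by rewrite lfunE.
pose gk k : 'End(V) := iter k (fun h => (g \o h)%VF) \1%VF.
have gkE k x : gk k x = iter k f x.
  elim: k => [|k IH]; first by rewrite id_lfunE.
  by rewrite /gk iterS -/(gk k) comp_lfunE IH hg.
pose K k := lker (gk k).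
have memK k v : (v \in K k) = (iter k f v == 0) by rewrite memv_ker gkE.
have KS k : (K k <= K k.+1)%VS.
  by apply/subvP => v; rewrite !memK iterS => /eqP ->; rewrite mul0x.
have hdim : forall k, (exists m, K m = K m.+1) \/ (k <= \dim (K k))%N.
  elim=> [|k [IH|IH]]; [by right | by left |].
  case: (eqVneq (K k) (K k.+1)) => [E|NE]; first by left; exists k.
  right; apply: leq_ltn_trans IH _.
  by rewrite ltnNge; apply: contra NE => h; rewrite eqEdim KS h.
have [m Km] : exists m, K m = K m.+1.
  case: (hdim (\dim {:V}).+1) => // h; have := leq_trans h (dimvS (subvf (K _))).
  by rewrite ltnn.
have stab u : iter m.+1 f u = 0 -> iter m f u = 0.
  by move=> /eqP; rewrite -memK -Km memK => /eqP.
have stab2 j w : iter (m + j) f w = 0 -> iter m f w = 0.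
  elim: j w => [|j IH] w; first by rewrite addn0.
  rewrite -addSnnS iterD => /stab; rewrite -iterD; exact: IH.
have Kcap : (K m :&: limg (gk m) = 0)%VS.
  apply/vspaceP => v; rewrite memv0; apply/memv_capP/eqP => [[]|->].
    rewrite memK => /eqP hk /memv_imgP [w _ vE]; rewrite vE gkE in hk *.
    by apply: (stab2 m); rewrite iterD.
  by split; rewrite mem0v.
have Ksum : (K m + limg (gk m) = fullv)%VS.
  apply/eqP; rewrite eqEdim subvf /= dimv_disjoint_sum //.
  by rewrite -(limg_ker_dim (gk m) fullv) capfv.
have Kid : is_ideal mul (K m).
  move=> x y; rewrite !memK => /eqP hy.
  by rewrite (HC y x) iter_mul hy mulx0 eqxx.
have Knd : B_nondeg_on B (K m).
  move=> k; rewrite memK => /eqP hk hK; apply: Bnd => w.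
  have : w \in (K m + limg (gk m))%VS by rewrite Ksum memvf.
  case/memv_addP => u Ku [v /memv_imgP [w' _ ->] ->].
  rewrite BDr hK // gkE -iter_sym hk Bsym B0r add0r //.
case: (Hirr _ Kid Knd) => HK.
  right.
  have g0 : lker g == 0%VS.
    apply/eqP/vspaceP => v; rewrite memv0 memv_ker hg.
    apply/eqP/eqP => [fv|->]; last by rewrite mul0x.
    have : v \in K m.+1 by rewrite memK iterSr fv iter0.
    by rewrite -Km HK memv0 => /eqP.
  exists (g^-1)%VF => x; first by rewrite -hg lker0_lfunK.
  by rewrite -hg lker0_lfunVK.
left; exists m => x.
by apply/eqP; rewrite -memK HK memvf.
Qed.

End Jordan.

Theorem mainTheorem15 (F : fieldType) (V : vectType F)
  (mul : V -> V -> V) (B : V -> V -> F)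
  (charF0 : [pchar F] =i pred0)
  (HJ : jordan_mul mul) (HB : pseudo_euclidean mul B)
  (Hirr : B_irreducible mul B)
  (e e' : (\dim {:V}).-tuple V) (Hdual : dual_bases B e e') :
  nilpotent_op (R_casimir mul e e') \/ bijective (R_casimir mul e e').

Proof. exact: (@casimir_dichotomy F V mul charF0 HJ B HB e e' Hdual Hirr). Qed.
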